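(* For an integer $m\ge 0$ let $\mathbf{S}_m=\{1,\dots,m\}^2$ (empty for $m=0$). Two squares $(i,j),(i',j')$ are said to be on a common diagonal if $i-j=i'-j'$ or $i+j=i'+j'$. Let $R_{\mathbf{W}}(m,k)$ be the number of $k$-element subsets of $\{(i,j)\in\mathbf{S}_m: i+j \text{ even}\}$ with no two distinct elements on a common diagonal, and let $R_{\mathbf{K}}(m,k)$ be the analogous number for $\{(i,j)\in\mathbf{S}_m: i+j\text{ odd}\}$ (i.e., nonattacking placements of $k$ bishops on the white, resp. black, squares). Let $\pi(m)=1$ if $m$ is odd and $0$ otherwise. Then, for all integers $m\ge 1$ and $k\ge 1$, $$R_{\mathbf{W}}(m,k)=R_{\mathbf{W}}(m-1,k)+(m-k+\pi(m))R_{\mathbf{W}}(m-1,k-1),$$ $$R_{\mathbf{K}}(m,k)=R_{\mathbf{K}}(m-1,k)+(m-k+1-\pi(m))R_{\mathbf{K}}(m-1,k-1),$$ with $R_{\mathbf{W}}(m,0)=R_{\mathbf{K}}(m,0)=1$ and $R_{\mathbf{W}}(0,k)=R_{\mathbf{K}}(0,k)=\delta_{k0}$; moreover, for all integers $m,k\ge 0$, $$R_{\mathbf{W}}(m,k)=\sum_{j=0}^{k}\binom{\lceil m/2\rceil}{j}\left\{ {m-j \atop m-k}\right\},\qquad R_{\mathbf{K}}(m,k)=\sum_{j=0}^{k}\binom{\lfloor m/2\rfloor}{j}\left\{ {m-j \atop m-k}\right\}.$$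
   Context: $\delta_{ij}$ is the Kronecker delta. The Stirling numbers of the second kind $\left\{ {n \atop r}\right\}$ are used in the extended sense for all integers $n,r$: for $n,r\ge 0$ they are the usual Stirling numbers of the second kind; for $n,r\le 0$, $\left\{ {n \atop r}\right\}=\left[{-r \atop -n}\right]$, the unsigned Stirling number of the first kind; and $\left\{ {n \atop r}\right\}=0$ when one of $n,r$ is positive and the other negative. (Equivalently, the unique extension satisfying $\left\{ {n \atop r}\right\}=r\left\{ {n-1 \atop r}\right\}+\left\{ {n-1 \atop r-1}\right\}$ for all integers, as in Knuth's convention.) Binomial coefficients $\binom{x}{j}$ with integer $j\ge0$ are $x(x-1)\cdots(x-j+1)/j!$. *)

(* Defs.v *)
From HB Require Import structures.
From mathcomp Require Import all_boot all_order all_algebra.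
Set Implicit Arguments. Unset Strict Implicit. Unset Printing Implicit Defensive.
Import Order.TTheory GRing.Theory Num.Theory.

(* Board S_m = {1..m}^2, represented 0-based as 'I_m * 'I_m
   (square (i,j) stands for (i+1, j+1); parity and diagonals are unchanged). *)
Definition same_diag (m : nat) (x y : 'I_m * 'I_m) : bool :=
  (((x.1 : nat)%:Z - (x.2 : nat)%:Z == (y.1 : nat)%:Z - (y.2 : nat)%:Z)%R)
  || ((x.1 : nat) + x.2 == (y.1 : nat) + y.2)%N.

Definition nonattacking (m : nat) (A : {set 'I_m * 'I_m}) : bool :=
  [forall x in A, forall y in A, (x != y) ==> ~~ same_diag x y].

Definition white (m : nat) : {set 'I_m * 'I_m} :=
  [set x : 'I_m * 'I_m | ~~ odd ((x.1 : nat) + x.2)].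
Definition black (m : nat) : {set 'I_m * 'I_m} :=
  [set x : 'I_m * 'I_m | odd ((x.1 : nat) + x.2)].

Definition RW (m k : nat) : nat :=
  #|[set A : {set 'I_m * 'I_m} | [&& A \subset white m, #|A| == k & nonattacking A]]|.
Definition RK (m k : nat) : nat :=
  #|[set A : {set 'I_m * 'I_m} | [&& A \subset black m, #|A| == k & nonattacking A]]|.

Fixpoint stirling2n (n r : nat) : nat :=
  match n, r with
  | 0, 0 => 1
  | 0, _.+1 => 0
  | _.+1, 0 => 0
  | n'.+1, r'.+1 => r'.+1 * stirling2n n' r'.+1 + stirling2n n' r'
  end.

Fixpoint stirling1n (n k : nat) : nat :=
  match n, k with
  | 0, 0 => 1
  | 0, _.+1 => 0
  | _.+1, 0 => 0
  | n'.+1, k'.+1 => n' * stirling1n n' k'.+1 + stirling1n n' k'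
  end.

(* Knuth's extension of {n \atop r} to all integers *)
Definition stirling2 (n r : int) : nat :=
  match n, r with
  | Posz n', Posz r' => stirling2n n' r'
  | Posz 0, Negz _ => 0
  | Negz _, Posz 0 => 0
  | Negz n', Negz r' => stirling1n r'.+1 n'.+1   (* [ -r  -n ] *)
  | _, _ => 0
  end.

(* Main.v *)
Require Import Defs.
From HB Require Import structures.
From mathcomp Require Import all_boot all_order all_algebra.
From mathcomp Require Import zify.
Import Order.TTheory GRing.Theory Num.Theory.
Set Implicit Arguments. Unset Strict Implicit. Unset Printing Implicit Defensive.

Definition Gs (f : nat -> nat) n x := \sum_(k < n.+1) f k * x ^_ (n - k).

Lemma ffact_mul x i : x ^_ i * x = x ^_ i.+1 + i * x ^_ i.
Proof.
rewrite ffactnSr; case: (leqP i x) => h.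
  by rewrite [i * _]mulnC -mulnDr subnK.
by rewrite ffact_small // !mul0n muln0.
Qed.

Lemma Gs_step u v n c x : n <= c -> (forall k, n < k -> v k = 0) -> u 0 = v 0 ->
  (forall k, k <= n -> u k.+1 = v k.+1 + (c - k) * v k) ->
  Gs u n.+1 x = Gs v n x * (x + (c - n)).
Proof.
move=> hnc hv h0 hu; rewrite /Gs big_ord_recl /= h0 subn0.
rewrite (eq_bigr (fun i : 'I_n.+1 => v i.+1 * x ^_ (n - i) + (c - i) * v i * x ^_ (n - i))); last first.
  move=> i _; rewrite /bump /= add1n subSS hu ?mulnDl //; exact: ltn_ord i.
rewrite big_split /= [RHS]big_distrl /=.
rewrite [in RHS](eq_bigr (fun i : 'I_n.+1 => v i * x ^_ (n.+1 - i) + (c - i) * v i * x ^_ (n - i))); last first.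
  move=> i _; have hi : i <= n by exact: ltn_ord i.
  move: (ffact_mul x (n - i)); rewrite -subSn //.
  set y := x ^_ (n - i); set z := x ^_ (n.+1 - i); set w := v i => e.
  rewrite -mulnA mulnDr e.
  have -> : c - i = (n - i) + (c - n) by lia.
  by rewrite !mulnDr !mulnDl !mulnA addnA [w * (n - i)]mulnC -[w * y * (c - n)]mulnA [y * _]mulnC mulnA [w * (c - n)]mulnC.
rewrite big_split /= addnA; congr (_ + _).
rewrite [RHS]big_ord_recl /= subn0; congr (_ + _); rewrite big_ord_recr /= hv // mul0n addn0.
apply: eq_bigr => i _; by rewrite /bump /= add1n subSS.
Qed.

Lemma sum_split (f : nat -> nat) j n : j <= n ->
  \sum_(i < n.+1) f i * j ^_ i = \sum_(0 <= i < j) f i * j ^_ i + f j * j`!.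
Proof.
move=> hj.
rewrite -(big_mkord xpredT (fun i => f i * j ^_ i)).
rewrite (big_cat_nat (leq0n j) (leqW hj)).
rewrite (big_ltn (hj : j < n.+1)) ffactnn.
have z : \sum_(j.+1 <= i < n.+1) f i * j ^_ i = 0.
  rewrite big_nat_cond big1 //.
  by move=> i /andP [/andP [hi _] _]; rewrite ffact_small // muln0.
rewrite z /=; by rewrite addn0.
Qed.

Lemma poly_uniq (a b : nat -> nat) n : (forall x, \sum_(i < n.+1) a i * x ^_ i = \sum_(i < n.+1) b i * x ^_ i) ->
  forall i, i <= n -> a i = b i.
Proof.
move=> H.
suff: forall j, j <= n.+1 -> forall i, i < j -> a i = b i by move=> S i hi; apply: (S n.+1).
elim=> [//|j IH] hj i hi.
have hjn : j <= n by [].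
have IH' := IH (ltnW hj).
case: (ltngtP i j) => [hij|hji|eij]; [exact: IH' | by move: hi; rewrite ltnS leqNgt hji | ].
subst i.
have := H j.
rewrite !(sum_split _ hjn).
rewrite (eq_big_nat _ _ (F2 := fun i => b i * j ^_ i)); last first.
  by move=> i /andP [_ hi0]; rewrite IH'.
move=> /addnI /eqP; rewrite eqn_pmul2r ?fact_gt0 //; move/eqP.
done.
Qed.

Lemma Gs_rev f n x : Gs f n x = \sum_(i < n.+1) f (n - i) * x ^_ i.
Proof.
rewrite /Gs (reindex_inj rev_ord_inj) /=; apply: eq_bigr => i _.
have hi : i <= n by exact: ltn_ord i.
by rewrite subSS subKn.
Qed.

Lemma Gs_uniq u w n : (forall x, Gs u n x = Gs w n x) -> forall k, k <= n -> u k = w k.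
Proof.
move=> H k hk.
have := @poly_uniq (fun i => u (n - i)) (fun i => w (n - i)) n.
move=> /(_ _ (n - k) (leq_subr _ _)); rewrite subKn //; apply.
by move=> x; rewrite -!Gs_rev.
Qed.


Lemma stir_small n i : n < i -> stirling2n n i = 0.
Proof.
elim: n i => [|n IH] [|i] //= h.
rewrite (IH i.+1) ?(IH i) ?muln0 //; lia.
Qed.

Lemma stir_pow x n : x ^ n = \sum_(i < n.+1) stirling2n n i * x ^_ i.
Proof.
elim: n => [|n IH]; first by rewrite big_ord1.
rewrite expnSr IH big_distrl /=.
rewrite (eq_bigr (fun i : 'I_n.+1 => stirling2n n i * x ^_ i.+1 + i * stirling2n n i * x ^_ i)); last first.
  by move=> i _; rewrite -mulnA ffact_mul mulnDr mulnCA mulnA.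
rewrite big_split /=.
rewrite [RHS]big_ord_recl /= mul0n add0n.
rewrite [RHS](eq_bigr (fun i : 'I_n.+1 => stirling2n n i * x ^_ i.+1 + i.+1 * stirling2n n i.+1 * x ^_ i.+1)); last first.
  by move=> i _; rewrite /bump /= add1n /= mulnDl mulnA addnC.
rewrite big_split /=; congr (_ + _).
rewrite big_ord_recl /= mul0n add0n big_ord_recr /= stir_small // muln0 mul0n addn0.
by apply: eq_bigr => i _; rewrite /bump /= add1n.
Qed.

Lemma sum_ext (F : nat -> nat) p q : p <= q -> (forall j, p <= j < q -> F j = 0) ->
  \sum_(j < p) F j = \sum_(j < q) F j.
Proof.
move=> hpq hF.
rewrite -(big_mkord xpredT F) -(big_mkord xpredT F) (big_cat_nat (leq0n p) hpq).
have z : \sum_(p <= i < q) F i = 0.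
  by rewrite big_nat_cond big1 // => j /andP [hj _]; apply: hF.
by rewrite z /= addn0.
Qed.

Lemma stir_pow_ext x n N : n <= N -> x ^ n = \sum_(i < N.+1) stirling2n n i * x ^_ i.
Proof.
move=> h; rewrite stir_pow; apply: (sum_ext (F := fun i => stirling2n n i * x ^_ i)) => //.
by move=> j /andP [hj _]; rewrite stir_small // mul0n.
Qed.

Definition Fn a m k := \sum_(j < k.+1) 'C(a, j) * stirling2n (m - j) (m - k).

Lemma PF a b x : (x + 1) ^ a * x ^ b = Gs (Fn a (a + b)) (a + b) x.
Proof.
set m := a + b.
rewrite expnDn big_distrl /=.
rewrite (eq_bigr (fun j : 'I_a.+1 => 'C(a, j) * \sum_(i < m.+1) stirling2n (m - j) i * x ^_ i)); last first.
  move=> j _; have hj : j <= a by exact: ltn_ord j.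
  rewrite exp1n muln1 -mulnA -expnD -(stir_pow_ext x (leq_subr j m)).
  by congr (_ * x ^ _); rewrite /m; lia.
rewrite (eq_bigr (fun j : 'I_a.+1 => \sum_(i < m.+1) 'C(a, j) * stirling2n (m - j) i * x ^_ i)); last first.
  by move=> j _; rewrite big_distrr; apply: eq_bigr => i _; rewrite /= mulnA.
rewrite exchange_big /= Gs_rev; apply: eq_bigr => i _.
rewrite -big_distrl /=; congr (_ * _).
have hi : i <= m by exact: ltn_ord i.
rewrite /Fn subKn //.
have ha : a <= m by rewrite /m leq_addr.
rewrite (@sum_ext (fun j => 'C(a, j) * stirling2n (m - j) i) a.+1 m.+1) //; last first.
  by move=> j /andP [hj _]; rewrite bin_small // mul0n.
rewrite (@sum_ext (fun j => 'C(a, j) * stirling2n (m - j) i) (m - i).+1 m.+1) //.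
  by rewrite ltnS leq_subr.
move=> j /andP [hj hj']; rewrite stir_small ?muln0 //.
by rewrite ltnS in hj'; lia.
Qed.


Section Board.
Variable m : nat.
Local Notation T := ('I_m * 'I_m)%type.

Definition dd (x : T) : int := ((x.1 : nat)%:Z - (x.2 : nat)%:Z)%R.
Definition ss (x : T) : nat := x.1 + x.2.

Lemma same_diagE x y : same_diag x y = (dd x == dd y) || (ss x == ss y).
Proof. by []. Qed.

Lemma same_diagC (x y : T) : same_diag x y = same_diag y x.
Proof. by rewrite !same_diagE eq_sym (eq_sym (ss x)). Qed.

Definition NA (B : {set T}) k :=
  [set A : {set T} | [&& A \subset B, #|A| == k & nonattacking A]].
Definition N B k := #|NA B k|.

Lemma dd_ss_inj x y : dd x = dd y -> ss x = ss y -> x = y.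
Proof.
move: x y => [[a ha] [b hb]] [[c hc] [e he]]; rewrite /dd /ss /= => h1 h2.
have e1 : a = c by lia.
have e2 : b = e by lia.
subst; congr (_, _); exact: val_inj.
Qed.

Lemma nonattackingP (A : {set T}) :
  reflect (forall x y, x \in A -> y \in A -> x != y -> ~~ same_diag x y) (nonattacking A).
Proof.
apply: (iffP idP) => [H x y xA yA nxy | H].
  by move/forall_inP: H => /(_ x xA) /forall_inP /(_ y yA) /implyP; apply.
apply/forall_inP => x xA; apply/forall_inP => y yA; apply/implyP; exact: H.
Qed.

Lemma N0 B : N B 0 = 1.
Proof.
rewrite /N (_ : NA B 0 = [set set0]) ?cards1 //.
apply/setP => A; rewrite !inE cards_eq0.
case: (A =P set0) => [->|] /=; last by rewrite andbF.
rewrite sub0set /=; apply/nonattackingP => x y; by rewrite inE.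
Qed.

Section Step.
Variables (B : {set T}) (c : int).
Let Bc := [set x in B | dd x == c].
Let B' := [set x in B | dd x != c].
Hypothesis nest : forall x, x \in B' -> exists2 y, y \in Bc & ss y = ss x.

Definition taken (A : {set T}) := [set y in Bc | [exists x in A, ss x == ss y]].

Lemma taken_card k A : A \in NA B' k -> #|taken A| = k.
Proof.
rewrite inE => /and3P [sAB /eqP <- na].
have sA : {in A &, injective ss}.
  move=> x y xA yA e; apply/eqP; apply/negPn/negP => nxy.
  by move/nonattackingP: na => /(_ x y xA yA nxy); rewrite same_diagE e eqxx orbT.
have sC : {in taken A &, injective ss}.
  move=> x y; rewrite !inE => /andP [/andP [_ /eqP hx] _] /andP [/andP [_ /eqP hy] _] e.
  by apply: dd_ss_inj => //; rewrite hx hy.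
rewrite !cardE -(size_map ss (enum (taken A))) -(size_map ss (enum A)).
apply: perm_size; apply: uniq_perm.
- rewrite map_inj_in_uniq ?enum_uniq // => x y; rewrite !mem_enum; exact: sC.
- rewrite map_inj_in_uniq ?enum_uniq // => x y; rewrite !mem_enum; exact: sA.
move=> z; apply/mapP/mapP => [[y] | [x]]; rewrite mem_enum => hy ->.
  move: hy; rewrite inE => /andP [_ /exists_inP [x xA /eqP e]].
  by exists x; rewrite ?mem_enum.
have xB' : x \in B' by apply: (subsetP sAB).
have [y yC e] := nest xB'.
exists y => //; rewrite mem_enum inE yC /=.
by apply/exists_inP; exists x => //; rewrite e.
Qed.

Definition free (A : {set T}) := Bc :\: taken A.

Lemma free_card k A : A \in NA B' k -> #|free A| = #|Bc| - k.
Proof.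
move=> hA; rewrite /free cardsD (setIidPr _) ?(taken_card hA) //.
by apply/subsetP => y; rewrite inE => /andP [].
Qed.

Lemma NA_k_le k : N B' k > 0 -> k <= #|Bc|.
Proof.
rewrite /N card_gt0 => /set0Pn [A hA].
rewrite -(taken_card hA); apply: subset_leq_card.
by apply/subsetP => y; rewrite inE => /andP [].
Qed.

Lemma inB'B x : x \in B' -> x \in B.
Proof. by rewrite inE => /andP []. Qed.

Lemma freeP A y : y \in free A -> [/\ y \in B, dd y = c & forall x, x \in A -> ss x != ss y].
Proof.
rewrite !inE => /andP [hn /andP [yB /eqP yc]]; split => // x xA.
apply/negP => /eqP e; move: hn; rewrite yB yc eqxx /=.
by move/negP; apply; apply/exists_inP; exists x => //; rewrite e.
Qed.

Lemma L1 k : N B k.+1 = N B' k.+1 + (#|Bc| - k) * N B' k.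
Proof.
set X := NA B k.+1.
set Q := [set A : {set T} | [exists y in A, y \in Bc]].
rewrite /N -(cardsID Q X) addnC; congr (_ + _).
  apply: eq_card => A; rewrite !inE.
  apply/andP/and3P => [[hQ /and3P [sAB hc na]] | [sAB' hc na]].
    split => //; apply/subsetP => x xA; rewrite inE (subsetP sAB x xA) /=.
    apply/negP => /eqP e; move/negP: hQ; apply; apply/exists_inP; exists x => //.
    by rewrite inE (subsetP sAB x xA) e eqxx.
  split; last by rewrite hc na !andbT; apply/subsetP => x /(subsetP sAB'); exact: inB'B.
  apply/negP => /exists_inP [x xA]; rewrite inE => /andP [_ /eqP e].
  by move: (subsetP sAB' x xA); rewrite inE e eqxx andbF.
set D := [set p : {set T} * T | (p.1 \in NA B' k) && (p.2 \in free p.1)].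
have notin A y : A \in NA B' k -> y \in free A -> y \notin A.
  rewrite inE => /and3P [sAB _ _] /freeP [_ yc _]; apply/negP => yA.
  by move: (subsetP sAB y yA); rewrite inE yc eqxx andbF.
have eS : X :&: Q = (fun p : {set T} * T => p.2 |: p.1) @: D.
  apply/setP => S; apply/idP/imsetP.
    rewrite !inE => /andP [/and3P [sSB /eqP cS na] /exists_inP [y yS yC]].
    have yc : dd y = c by move: yC; rewrite inE => /andP [_ /eqP].
    have att x : x \in S -> x != y -> ~~ same_diag x y.
      by move=> xS nxy; move/nonattackingP: na; apply.
    exists (S :\ y, y); last by rewrite /= setD1K.
    rewrite inE /=; apply/andP; split.
      rewrite inE; apply/and3P; split.
      - apply/subsetP => x; rewrite !inE => /andP [nxy xS].
        rewrite (subsetP sSB x xS) /=; apply/negP => /eqP e.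
        by move: (att x xS nxy); rewrite same_diagE e yc eqxx.
      - by move: cS; rewrite (cardsD1 y) yS add1n => -[->].
      - apply/nonattackingP => x z; rewrite !inE => /andP [_ xS] /andP [_ zS].
        by move/nonattackingP: na; apply.
    rewrite /free in_setD yC andbT; apply/negP; rewrite inE => /andP [_] /exists_inP [x]; rewrite !inE => /andP [nxy xS] /eqP e.
    by move: (att x xS nxy); rewrite same_diagE e eqxx orbT.
  move=> [[A y]]; rewrite inE /= => /andP [hA hy] ->.
  have yA := notin A y hA hy.
  have [yB yc hs] := freeP hy.
  move: hA; rewrite inE => /and3P [sAB /eqP cA na].
  rewrite !inE; apply/andP; split; last first.
    by apply/exists_inP; exists y; rewrite ?setU11 // inE yB yc eqxx.
  apply/and3P; split.
  - apply/subsetP => x; rewrite in_setU1 => /orP [/eqP -> //|xA].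
    exact: inB'B (subsetP sAB x xA).
  - by rewrite cardsU1 yA cA.
  - have hx x : x \in A -> ~~ same_diag x y.
      move=> xA; rewrite same_diagE negb_or hs // andbT yc.
      by move: (subsetP sAB x xA); rewrite inE => /andP [].
    apply/nonattackingP => x z; rewrite !in_setU1.
    move=> /orP [/eqP ->|xA] /orP [/eqP ->|zA] nxz.
    + by rewrite eqxx in nxz.
    + by rewrite same_diagC; exact: hx.
    + exact: hx.
    + by move/nonattackingP: na; apply.
have inj : {in D &, injective (fun p : {set T} * T => p.2 |: p.1)}.
  move=> [A y] [A' y'] hp hp' e.
  move: hp; rewrite inE /= => /andP [hA hy].
  move: hp'; rewrite inE /= => /andP [hA' hy'].
  have yA := notin A y hA hy.
  have yA' := notin A' y' hA' hy'.
  have ey : y = y'.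
    have : y \in y' |: A' by rewrite -e setU11.
    rewrite in_setU1 => /orP [/eqP //|yA'2].
    move: hA'; rewrite inE => /and3P [sAB _ _].
    have [_ yc _] := freeP hy.
    by move: (subsetP sAB y yA'2); rewrite inE yc eqxx andbF.
  subst y'; congr (_, _).
  by rewrite -(setU1K yA) e setU1K.
rewrite eS card_in_imset //.
rewrite -sum1_card.
rewrite (eq_bigl (fun p : {set T} * T => (p.1 \in NA B' k) && (p.2 \in free p.1))); last first.
  by move=> p; rewrite inE.
rewrite -(pair_big_dep (fun A => A \in NA B' k) (fun A y => y \in free A) (fun _ _ => 1)) /=.
rewrite (eq_bigr (fun _ => #|Bc| - k)); last by move=> A hA; rewrite sum1_card (free_card hA).
by rewrite sum_nat_const mulnC.
Qed.

Lemma L2 n x : n <= #|Bc| -> (forall k, n < k -> N B' k = 0) ->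
  Gs (N B) n.+1 x = Gs (N B') n x * (x + (#|Bc| - n)) /\ (forall k, n.+1 < k -> N B k = 0).
Proof.
move=> hn hz; split.
  apply: Gs_step => //; first by rewrite !N0.
  by move=> k _; rewrite L1.
case=> [//|k] hk; rewrite L1 !hz ?muln0 //; lia.
Qed.

End Step.
End Board.


Lemma odd_mod a b : odd a = odd b -> a %% 2 = b %% 2.
Proof. by rewrite !modn2 => ->. Qed.

Lemma mod_odd a b : a %% 2 = b %% 2 -> odd a = odd b.
Proof. by rewrite !modn2; case: (odd a); case: (odd b). Qed.

Section Levels.
Variable m : nat.
Local Notation T := ('I_m * 'I_m)%type.

Definition lev (x : T) := (x.1 - x.2) + (x.2 - x.1).
Definition V t := [set x : T | (odd (ss x) == odd t) && (t <= lev x)].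

Lemma ddP (x : T) t : (dd x == Posz t) = (x.1 == x.2 + t :> nat).
Proof. rewrite /dd; apply/eqP/eqP; lia. Qed.

Lemma ddN (x : T) t : (dd x == (- Posz t)%R) = (x.2 == x.1 + t :> nat).
Proof. rewrite /dd; apply/eqP/eqP; lia. Qed.

Lemma card_lt k : k <= m -> #|[set j : 'I_m | j < k]| = k.
Proof.
move=> hk.
have inj : injective (widen_ord hk) by move=> a b /(congr1 val) /= e; apply: val_inj.
have -> : [set j : 'I_m | j < k] = widen_ord hk @: [set: 'I_k].
  apply/setP => j; rewrite inE.
  apply/idP/imsetP => [hj | [i _ ->] /=]; last exact: ltn_ord.
  by exists (Ordinal hj) => //; apply: val_inj.
by rewrite card_imset // cardsT card_ord.
Qed.

Lemma card_colP t : #|[set x : T | x.1 == x.2 + t :> nat]| = m - t.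
Proof.
have inj : {in [set x : T | x.1 == x.2 + t :> nat] &, injective (fun x : T => x.2)}.
  move=> [a b] [a' b']; rewrite !inE /= => /eqP h /eqP h' e; subst b'.
  by congr (_, _); apply: val_inj; rewrite /= h h'.
rewrite -(card_in_imset inj) -(card_lt (leq_subr t m)); apply: eq_card => j; rewrite inE.
apply/imsetP/idP => [[x] | hj].
  case: x => a b; rewrite inE /= => /eqP h ->; have := ltn_ord a; lia.
have h : j + t < m by lia.
by exists (Ordinal h, j) => //; rewrite inE.
Qed.

Lemma card_colN t : #|[set x : T | x.2 == x.1 + t :> nat]| = m - t.
Proof.
have inj : {in [set x : T | x.2 == x.1 + t :> nat] &, injective (fun x : T => x.1)}.
  move=> [a b] [a' b']; rewrite !inE /= => /eqP h /eqP h' e; subst a'.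
  by congr (_, _); apply: val_inj; rewrite /= h h'.
rewrite -(card_in_imset inj) -(card_lt (leq_subr t m)); apply: eq_card => j; rewrite inE.
apply/imsetP/idP => [[x] | hj].
  case: x => a b; rewrite inE /= => /eqP h ->; have := ltn_ord b; lia.
have h : j + t < m by lia.
by exists (j, Ordinal h) => //; rewrite inE.
Qed.

Lemma nestP t (x : T) : odd (ss x) = odd t -> t <= lev x ->
  exists y : T, (y.1 == y.2 + t :> nat) && (ss y == ss x).
Proof.
move=> hp hl; have hm := odd_mod hp.
have := ltn_ord x.1; have := ltn_ord x.2.
rewrite /ss /lev in hm hl * => hx2 hx1.
have h1 : (x.1 + x.2 + t) %/ 2 < m by lia.
have h2 : (x.1 + x.2 - t) %/ 2 < m by lia.
by exists (Ordinal h1, Ordinal h2) => /=; apply/andP; split; apply/eqP; lia.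
Qed.

Lemma nestN t (x : T) : odd (ss x) = odd t -> t <= lev x ->
  exists y : T, (y.2 == y.1 + t :> nat) && (ss y == ss x).
Proof.
move=> hp hl; have hm := odd_mod hp.
have := ltn_ord x.1; have := ltn_ord x.2.
rewrite /ss /lev in hm hl * => hx2 hx1.
have h1 : (x.1 + x.2 + t) %/ 2 < m by lia.
have h2 : (x.1 + x.2 - t) %/ 2 < m by lia.
by exists (Ordinal h2, Ordinal h1) => /=; apply/andP; split; apply/eqP; lia.
Qed.

Lemma lev_odd (x : T) : odd (lev x) = odd (ss x).
Proof. by apply: mod_odd; rewrite /lev /ss; lia. Qed.

Lemma oddeqE a b : (odd a == odd b) = (a %% 2 == b %% 2).
Proof. by rewrite !modn2; case: (odd a); case: (odd b). Qed.

Ltac bdestr := repeat match goal with H : is_true (_ && _) |- _ => case/andP: H => ? ? end;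
  repeat match goal with H : is_true (_ == _) |- _ => move/eqP: H => ? end;
  repeat match goal with H : is_true (~~ (_ == _)) |- _ => move/eqP: H => ? end.
Ltac bsolve := repeat (match goal with
  | |- is_true (_ && _) => apply/andP; split
  | |- is_true (~~ (_ == _)) => apply/negP => /eqP ?
  | |- is_true (_ == _) => apply/eqP
  end); lia.
Ltac bboth := apply/idP/idP => ?; bdestr; bsolve.

Lemma V_colP t : [set x in V t | dd x == Posz t] = [set x : T | x.1 == x.2 + t :> nat].
Proof. apply/setP => -[a b]; rewrite !inE ddP /ss /lev /= oddeqE; bboth. Qed.

Lemma V_colN t : [set x in V t | dd x == (- Posz t)%R] = [set x : T | x.2 == x.1 + t :> nat].
Proof. apply/setP => -[a b]; rewrite !inE ddN /ss /lev /= oddeqE; bboth. Qed.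

Lemma V1_colP t : 0 < t ->
  [set x in [set x in V t | dd x != (- Posz t)%R] | dd x == Posz t] = [set x : T | x.1 == x.2 + t :> nat].
Proof. move=> ht; apply/setP => -[a b]; rewrite !inE ddP ddN /ss /lev /= oddeqE; bboth. Qed.

Lemma V_step t : 0 < t ->
  [set x in [set x in V t | dd x != (- Posz t)%R] | dd x != Posz t] = V t.+2.
Proof. move=> ht; apply/setP => -[a b]; rewrite !inE ddP ddN /ss /lev !oddeqE /=; bboth. Qed.

Lemma V0_step : [set x in V 0 | dd x != Posz 0] = V 2.
Proof. apply/setP => -[a b]; rewrite !inE ddP /ss /lev !oddeqE /=; bboth. Qed.

Lemma V_empty t : m <= t -> V t = set0.
Proof.
move=> h; apply/setP => x; rewrite !inE.
have := ltn_ord x.1; have := ltn_ord x.2; rewrite /lev; case: (odd _ == _) => //=; lia.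
Qed.

Lemma white_V : white m = V 0.
Proof. by apply/setP => x; rewrite !inE /= andbT; case: (odd _). Qed.

Lemma black_V : black m = V 1.
Proof.
apply/setP => x; rewrite !inE /= eqb_id.
case h: (odd _) => //=; apply/esym; rewrite /lev.
have : odd (lev x) by rewrite lev_odd.
by rewrite /lev; case: (_ - _ + _).
Qed.

End Levels.


Definition PK r x := (x + 1) ^ (r./2) * x ^ (uphalf r).
Definition PW r x := (x + 1) ^ (uphalf r) * x ^ (r./2).

Lemma oS t : odd t.+2 = odd t.
Proof. by rewrite /= negbK. Qed.

Section Claim.
Variable m : nat.
Local Notation T := ('I_m * 'I_m)%type.

Lemma N_set0 k : 0 < k -> N (set0 : {set T}) k = 0.
Proof.
move=> hk; rewrite /N; apply/eqP; rewrite cards_eq0; apply/eqP/setP => A; rewrite !inE subset0.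
case: (A =P set0) => [->|] //=; rewrite cards0; by case: k hk.
Qed.

Lemma claim x r : r <= m ->
  Gs (N (V m (m.+1 - r))) r x = PK r x /\ (forall k, r < k -> N (V m (m.+1 - r)) k = 0).
Proof.
elim/ltn_ind: r => r IH hr.
case: r IH hr => [|[|r]] IH hr.
- rewrite subn0 V_empty //; split; first by rewrite /Gs big_ord1 N0.
  by move=> k hk; exact: N_set0.
- rewrite subSS subn0 V_empty //; split; last by move=> k hk; apply: N_set0; lia.
  by rewrite /Gs big_ord_recr big_ord1 /= N0 N_set0 // /PK /= mul0n addn0 subn0 ffactn1 !mul1n ?expn1 // muln1.
set t := m.+1 - r.+2.
have ht : 0 < t by rewrite /t; lia.
have e2 : m.+1 - r = t.+2 by rewrite /t; lia.
have hmt : m - t = r.+1 by rewrite /t; lia.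
have [G1 Z1] := IH r (leqW (leqnn r.+1)) (leqW (ltnW hr)).
rewrite e2 in G1 Z1.
set B1 := [set y in V m t | dd y != (- Posz t)%R].
have nestA : forall x0, x0 \in [set y in B1 | dd y != Posz t] ->
    exists2 y, y \in [set y in B1 | dd y == Posz t] & ss y = ss x0.
  move=> x0; rewrite /B1 V_step // V1_colP // inE => /andP [/eqP hp hl].
  have [y /andP [hy /eqP hs]] := @nestP m t x0 (etrans hp (oS t)) (leq_trans (leqnSn _) (leqW hl)).
  by exists y; rewrite ?inE.
have hnA : r <= #|[set y in B1 | dd y == Posz t]| by rewrite /B1 V1_colP // card_colP hmt.
have hzA : forall k, r < k -> N [set y in B1 | dd y != Posz t] k = 0 by rewrite /B1 V_step.
have [GA ZA] := L2 nestA x hnA hzA.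
rewrite /B1 V_step // V1_colP // card_colP hmt G1 in GA.
have nestB : forall x0, x0 \in [set y in V m t | dd y != (- Posz t)%R] ->
    exists2 y, y \in [set y in V m t | dd y == (- Posz t)%R] & ss y = ss x0.
  move=> x0; rewrite V_colN !inE => /andP [/andP [/eqP hp hl] _].
  have [y /andP [hy /eqP hs]] := @nestN m t x0 hp hl.
  by exists y; rewrite ?inE.
have hnB : r.+1 <= #|[set y in V m t | dd y == (- Posz t)%R]| by rewrite V_colN card_colN hmt.
have [GB ZB] := L2 nestB x hnB ZA.
split => //.
rewrite GB -/B1 GA V_colN card_colN hmt subnn addn0 subSn // subnn.
rewrite /PK /= !expnS; set a := (x + 1) ^ _; set b := x ^ _; nia.
Qed.
End Claim.

Lemma GW m x : Gs (N (white m)) m x = PW m x /\ (forall k, m < k -> N (white m) k = 0).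
Proof.
rewrite white_V; case: m => [|m].
  by rewrite V_empty //; split; [rewrite /Gs big_ord1 N0 | exact: N_set0].
have nest0 : forall x0, x0 \in [set y in V m.+1 0 | dd y != Posz 0] ->
    exists2 y, y \in [set y in V m.+1 0 | dd y == Posz 0] & ss y = ss x0.
  move=> x0; rewrite V0_step inE => /andP [/eqP hp hl].
  have [y /andP [hy /eqP hs]] := @nestP m.+1 0 x0 (etrans hp (oS 0)) (leq0n _).
  by exists y; rewrite ?V_colP ?inE.
have hn : m <= #|[set y in V m.+1 0 | dd y == Posz 0]| by rewrite V_colP card_colP subn0.
have [G2 Z2] := claim x (m := m.+1) (r := m) (leqnSn m).
rewrite (_ : m.+2 - m = 2) in G2 Z2; last by lia.
have hz : forall k, m < k -> N [set y in V m.+1 0 | dd y != Posz 0] k = 0 by rewrite V0_step.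
have [G Z] := L2 nest0 x hn hz.
split => //.
rewrite G V0_step G2 V_colP card_colP subn0 subSn // subnn.
rewrite /PW /PK /= expnS; set a := (x + 1) ^ _; set b := x ^ _; nia.
Qed.

Lemma GK m x : Gs (N (black m)) m x = PK m x /\ (forall k, m < k -> N (black m) k = 0).
Proof.
rewrite black_V; have := claim x (m := m) (r := m) (leqnn m).
by rewrite subSn // subnn.
Qed.


Lemma PW_S m x : PW m.+1 x = PW m x * (x + odd m.+1).
Proof.
rewrite /PW /= !uphalf_half; case: (odd m) => /=; rewrite ?add0n ?add1n !expnS;
  set a := (x + 1) ^ _; set b := x ^ _; nia.
Qed.

Lemma PK_S m x : PK m.+1 x = PK m x * (x + ~~ odd m.+1).
Proof.
rewrite /PK /= !uphalf_half negbK; case: (odd m) => /=; rewrite ?add0n ?add1n !expnS;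
  set a := (x + 1) ^ _; set b := x ^ _; nia.
Qed.

Lemma recW m k : 0 < m -> 0 < k -> k <= m ->
  RW m k = RW m.-1 k + (m - k + odd m) * RW m.-1 k.-1.
Proof.
case: m => // m _; case: k => // k _ hk /=.
set u := fun j => if j is j'.+1 then RW m j'.+1 + (m + odd m.+1 - j') * RW m j' else RW m 0.
have H : forall x, Gs u m.+1 x = Gs (RW m.+1) m.+1 x.
  move=> x; rewrite (@Gs_step u (RW m) m (m + odd m.+1)); [|exact: leq_addr|exact: (GW m x).2|by []|by []].
  have G1 : Gs (RW m) m x = PW m x := (GW m x).1.
  have G2 : Gs (RW m.+1) m.+1 x = PW m.+1 x := (GW m.+1 x).1.
  by rewrite G1 G2 PW_S; congr (_ * (_ + _)); lia.
have := Gs_uniq H hk; rewrite /u => <-; congr (_ + _ * _); lia.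
Qed.

Lemma recK m k : 0 < m -> 0 < k -> k <= m ->
  RK m k = RK m.-1 k + (m - k + 1 - odd m) * RK m.-1 k.-1.
Proof.
case: m => // m _; case: k => // k _ hk /=.
set u := fun j => if j is j'.+1 then RK m j'.+1 + (m + ~~ odd m.+1 - j') * RK m j' else RK m 0.
have H : forall x, Gs u m.+1 x = Gs (RK m.+1) m.+1 x.
  move=> x; rewrite (@Gs_step u (RK m) m (m + ~~ odd m.+1)); [|exact: leq_addr|exact: (GK m x).2|by []|by []].
  have G1 : Gs (RK m) m x = PK m x := (GK m x).1.
  have G2 : Gs (RK m.+1) m.+1 x = PK m.+1 x := (GK m.+1 x).1.
  by rewrite G1 G2 PK_S; congr (_ * (_ + _)); lia.
have := Gs_uniq H hk; rewrite /u => <-; congr (_ + _ * _).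
by rewrite /= negbK; case: (odd m) => /=; lia.
Qed.

Local Open Scope ring_scope.

Lemma stir_gen a m k (f : nat -> nat) : (a <= m)%N ->
  (forall x, Gs f m x = ((x + 1) ^ a * x ^ (m - a))%N) -> (forall k, (m < k)%N -> f k = 0%N) ->
  f k = (\sum_(0 <= j < k.+1) 'C(a, j) * stirling2 (m%:Z - j%:Z) (m%:Z - k%:Z))%N.
Proof.
move=> ha H Hz.
case: (leqP k m) => hk.
  have e : (a + (m - a) = m)%N by rewrite subnKC.
  have H2 : forall x, Gs f m x = Gs (Fn a m) m x by move=> x; rewrite H PF e.
  rewrite (Gs_uniq H2 hk) /Fn big_mkord; apply: eq_bigr => j _.
  have hj : (j <= m)%N by have := ltn_ord j; lia.
  by rewrite !subzn //; case: (m - j)%N.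
rewrite Hz // big_mkord big1 // => j _.
case: (leqP j a) => hja; last by rewrite bin_small.
have hj : (j <= m)%N by lia.
have -> : m%:Z - k%:Z = Negz (k - m).-1 by rewrite NegzE; lia.
rewrite subzn //; case: (m - j)%N => [|n] /=; by rewrite muln0.
Qed.

Lemma uh_h m : (uphalf m + m./2 = m)%N.
Proof. by rewrite uphalf_half -addnA addnn odd_double_half. Qed.

Theorem theorem2p2 :
  (forall m k : nat, (1 <= m)%N -> (1 <= k)%N ->
     (RW m k)%:Z = (RW m.-1 k)%:Z
                   + ((m%:Z - k%:Z + (odd m)%:Z) * (RW m.-1 k.-1)%:Z)
  /\ (RK m k)%:Z = (RK m.-1 k)%:Z
                   + ((m%:Z - k%:Z + 1 - (odd m)%:Z) * (RK m.-1 k.-1)%:Z))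
  /\ (forall m : nat, RW m 0 = 1%N /\ RK m 0 = 1%N)
  /\ (forall k : nat, RW 0 k = (k == 0%N) :> nat /\ RK 0 k = (k == 0%N) :> nat)
  /\ (forall m k : nat,
        RW m k = (\sum_(0 <= j < k.+1) 'C(uphalf m, j) * stirling2 (m%:Z - j%:Z) (m%:Z - k%:Z))%N
     /\ RK m k = (\sum_(0 <= j < k.+1) 'C(m./2, j) * stirling2 (m%:Z - j%:Z) (m%:Z - k%:Z))%N).
Proof.
have ZW m k : (m < k)%N -> RW m k = 0%N by move=> h; exact: (GW m 0).2.
have ZK m k : (m < k)%N -> RK m k = 0%N by move=> h; exact: (GK m 0).2.
split; [|split; [|split]].
- move=> m k hm hk; case: (leqP k m) => hkm.
    rewrite recW // recK //; split.
      by rewrite PoszD PoszM; congr (_ + _ * _); lia.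
    by rewrite PoszD PoszM; congr (_ + _ * _); case: (odd m) => /=; lia.
  rewrite !ZW ?ZK; try lia.
- by move=> m; split; apply: N0.
- move=> k; case: k => [|k]; first by split; apply: N0.
  by rewrite ZW ?ZK.
- move=> m k; have e := uh_h m; split.
    apply: stir_gen; first by rewrite -{2}e leq_addr.
      move=> x; have := (GW m x).1; rewrite /PW => ->.
      have e2 : (m - uphalf m = m./2)%N by rewrite -{1}e addKn.
      by rewrite e2.
    exact: ZW.
  apply: stir_gen; first by rewrite -{2}e leq_addl.
    move=> x; have := (GK m x).1; rewrite /PK => ->; rewrite mulnC.
    have e2 : (m - m./2 = uphalf m)%N by rewrite -{1}e addnK.
    by rewrite e2 mulnC.
  exact: ZK.
Qed.
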